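(* Let $G$ be a simple graph of order $n$ with adjacency eigenvalues $\lambda_1,\lambda_2,\dots,\lambda_n$ (listed with multiplicity), and let $G^l$ be the graph obtained from $G$ by adding a loop on each vertex of $G$. Let $p$ and $q$ be non-negative integers with $m=p+q\ge 1$, and let $(pG\cup qG^l)_{qn}$ denote the disjoint union of $p$ copies of $G$ and $q$ copies of $G^l$, a graph of order $mn$ with exactly $qn$ self-loops. If $|\lambda_i|\ge \max\left(\frac{p}{m},\frac{q}{m}\right)$ for each $i=1,2,\dots,n$, then $E\big((pG\cup qG^l)_{qn}\big)=mE(G)$.
   Context: For a simple graph $G$ with adjacency matrix $A(G)$ and eigenvalues $\lambda_1,\dots,\lambda_n$, the energy is $E(G)=\sum_{i=1}^n|\lambda_i|$. For a graph $G_\sigma$ of order $N$ obtained from a simple graph by attaching self-loops on $\sigma$ of its vertices, the adjacency matrix is $A(G_\sigma)=A(G)+I_\sigma$, where $I_\sigma$ is the $N\times N$ diagonal matrix with exactly $\sigma$ ones on the diagonal (at the looped vertices) and zeros elsewhere; if $\mu_1,\dots,\mu_N$ are the eigenvalues of $A(G_\sigma)$, its energy is $E(G_\sigma)=\sum_{i=1}^N\left|\mu_i-\frac{\sigma}{N}\right|$. The subscript in $(pG\cup qG^l)_{qn}$ indicates the number of loops $\sigma=qn$. *)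

(* Defs.v *)
From HB Require Import structures.
From mathcomp Require Import all_boot all_order all_algebra.
From mathcomp Require Import reals.

Set Implicit Arguments. Unset Strict Implicit. Unset Printing Implicit Defensive.
Import Order.TTheory GRing.Theory Num.Theory.
Local Open Scope ring_scope.

Definition simple_graph (V : finType) (e : rel V) : Prop :=
  symmetric e /\ irreflexive e.

(* Adjacency matrix A(G) + I_sigma of the graph (V, e) with self-loops on the
   vertex set L; vertices are indexed through enum_val. *)
Definition adjmx (R : realType) (V : finType) (e : rel V) (L : {set V})
  : 'M[R]_#|V| :=
  \matrix_(i, j) ((e (enum_val i) (enum_val j))%:R
                  + ((i == j) && (enum_val i \in L))%:R).

Definition is_spectrum (R : realType) (N : nat) (M : 'M[R]_N) (s : seq R) : Prop :=
  char_poly M = \prod_(x <- s) ('X - x%:P).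

(* Energy of a graph of order N with sigma loops, given its spectrum s:
   sum_i |mu_i - sigma/N|.  For a loopless graph (sigma = 0) this is sum |lambda_i|. *)
Definition energy_of (R : realType) (s : seq R) (sigma N : nat) : R :=
  \sum_(x <- s) `|x - sigma%:R / N%:R|.

(* Disjoint union p G \cup q G^l: vertices (k, v), copy k < p is G,
   copy k >= p is G^l (every vertex looped). *)
Definition union_rel (V : finType) (m : nat) (e : rel V) : rel ('I_m * V)%type :=
  fun x y => (x.1 == y.1) && e x.2 y.2.

Definition union_loops (V : finType) (p m : nat) : {set ('I_m * V)%type} :=
  [set x | p <= nat_of_ord x.1]%N.

(* Main.v *)
Require Import Defs.
From HB Require Import structures.
From mathcomp Require Import all_boot all_order all_algebra.
From mathcomp Require Import reals.
From mathcomp Require Import fingroup perm.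
From mathcomp Require Import ring lra.

Set Implicit Arguments. Unset Strict Implicit. Unset Printing Implicit Defensive.
Import Order.TTheory GRing.Theory Num.Theory.
Local Open Scope ring_scope.
Lemma det_reindex (S : comNzRingType) (T : finType) (F : T -> T -> S) k k'
  (f : 'I_k -> T) (g : 'I_k' -> T) :
  bijective f -> bijective g ->
  \det (\matrix_(i, j) F (f i) (f j)) = \det (\matrix_(i, j) F (g i) (g j)).
Proof.
move=> fb gb.
have ekk : k = k'.
  by have := bij_eq_card fb; have := bij_eq_card gb; rewrite !card_ord => -> .
subst k'.
case: (gb) => g' gK g'K.
have hinj : injective (g' \o f).
  apply: inj_comp; [exact: can_inj g'K | exact: bij_inj fb].
pose s := perm hinj.
have -> : \matrix_(i,j) F (f i) (f j)
   = row_perm s (col_perm s (\matrix_(i,j) F (g i) (g j))).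
  by apply/matrixP => i j; rewrite /row_perm /col_perm !mxE !permE /= !g'K.
rewrite row_permE col_permE !det_mulmx !det_perm odd_permV.
case: (odd_perm s); rewrite ?expr0 ?expr1 ?mul1r ?mulr1 //.
by rewrite mulrN1 mulN1r opprK.
Qed.

Lemma det_blocks (S : comNzRingType) (V : finType) m
  (F : 'I_m * V -> 'I_m * V -> S) :
  (forall x y, x.1 != y.1 -> F x y = 0) ->
  \det (\matrix_(i, j) F (enum_val i) (enum_val j) : 'M_#|{: 'I_m * V}|) =
  \prod_(k < m) \det (\matrix_(i, j) F (k, enum_val i) (k, enum_val j) : 'M_#|V|).
Proof.
elim: m F => [|m IH] F Fbd.
  rewrite big_ord0.
  have E : #|{: 'I_0 * V}| = 0%N by rewrite card_prod card_ord.
  pose f := fun i : 'I_0 => (enum_val (cast_ord (esym E) i) : 'I_0 * V).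
  have fb : bijective f.
    apply: inj_card_bij; last by rewrite E.
    by move=> i j /enum_val_inj /cast_ord_inj.
  by rewrite (det_reindex F (enum_val_bij _) fb) det_mx00.
pose gu (u : 'I_#|V| + 'I_#|{: 'I_m * V}|) : 'I_m.+1 * V :=
  match u with
  | inl a => (ord0, enum_val a)
  | inr b => (lift ord0 (enum_val b).1, (enum_val b).2) end.
pose g i := gu (split i).
have gb : bijective g.
  apply: inj_card_bij.
    apply: inj_comp; last exact: (can_inj (@splitK _ _)).
    case=> a [] b //.
      by case=> /enum_val_inj ->.
    case=> /eqP; rewrite !add0n => e1 e2; move/eqP/val_inj: e1 => e1; congr inr; apply: enum_val_inj.
    by move: e1 e2; case: (enum_val a) => ??; case: (enum_val b) => ?? /= -> ->.
  by rewrite card_ord !card_prod !card_ord mulSn.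
rewrite (det_reindex F (enum_val_bij _) gb).
pose A := (\matrix_(i,j) F (ord0, enum_val i) (ord0, enum_val j) : 'M_#|V|).
pose F' (x y : 'I_m * V) := F (lift ord0 x.1, x.2) (lift ord0 y.1, y.2).
pose B := (\matrix_(i,j) F' (enum_val i) (enum_val j) : 'M_#|{: 'I_m * V}|).
have -> : \matrix_(i,j) F (g i) (g j) = block_mx A 0 0 B.
  apply/matrixP => i j; rewrite -[i]splitK -[j]splitK.
  case: (split i) => a; case: (split j) => b; rewrite [LHS]mxE /g !unsplitK /=.
  - by rewrite block_mxEul !mxE.
  - by rewrite block_mxEur mxE; apply: Fbd; exact: neq_lift.
  - by rewrite block_mxEdl mxE; apply: Fbd; rewrite eq_sym; exact: neq_lift.
  - by rewrite block_mxEdr !mxE /F'; case: (enum_val a); case: (enum_val b).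
rewrite det_ublock IH; last first.
  by move=> x y /= nxy; apply: Fbd => /=; rewrite (inj_eq lift_inj).
by rewrite big_ord_recl.
Qed.

Lemma pointwise (R : realFieldType) (p q : nat) (x : R) :
  (0 < p + q)%N ->
  Num.max (p%:R / (p + q)%:R) (q%:R / (p + q)%:R) <= `|x| ->
  p%:R * `|x - q%:R / (p + q)%:R| + q%:R * `|x + 1 - q%:R / (p + q)%:R|
  = (p + q)%:R * `|x|.
Proof.
move=> mpos; rewrite ge_max => /andP [ha hb].
have m0 : 0 < (p + q)%:R :> R by rewrite ltr0n.
set m := (p + q)%:R in m0 ha hb *.
set b := q%:R / m in hb *.
have hq : q%:R = b * m by rewrite /b divfK // gt_eqF.
have hp : p%:R = (1 - b) * m.
  by rewrite mulrBl mul1r -hq /m natrD addrK.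
have b0 : 0 <= b by rewrite /b divr_ge0 // ltW.
have ha' : 1 - b <= `|x|.
  by move: ha; rewrite hp mulfK // gt_eqF.
rewrite hp hq.
have [x0|x0] := lerP 0 x.
  move: ha' hb; rewrite ger0_norm // => ha' hb.
  rewrite (ger0_norm (x := x - b)); last by lra.
  rewrite (ger0_norm (x := x + 1 - b)); last by lra.
  by ring.
move: ha' hb; rewrite ltr0_norm // => ha' hb.
rewrite (ler0_norm (x := x - b)); last by lra.
rewrite (ler0_norm (x := x + 1 - b)); last by lra.
by ring.
Qed.

Lemma card_loops (V : finType) (p q : nat) :
  #|union_loops V p (p + q)| = (q * #|V|)%N.
Proof.
have -> : union_loops V p (p + q) = setX [set k : 'I_(p + q) | (p <= k)%N] setT.
  by apply/setP => x; rewrite !inE andbT.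
rewrite cardsX cardsT; congr (_ * _)%N.
rewrite -sum1_card big_mkcond big_split_ord /=.
rewrite big1 ?add0n; last by move=> i _; rewrite inE /= leqNgt ltn_ord.
rewrite (eq_bigr (fun _ => 1%N)); last by move=> i _; rewrite inE /= leq_addr.
by rewrite sum1_card card_ord.
Qed.

Lemma char_union (R : realType) (V : finType) (e : rel V) (p q : nat) :
  char_poly (adjmx R (@union_rel V (p + q) e) (union_loops V p (p + q))) =
  \prod_(k < p + q) (if (k < p)%N then char_poly (adjmx R e set0)
                     else (char_poly (adjmx R e set0)) \Po ('X - 1)).
Proof.
pose L := union_loops V p (p + q).
pose FU (x y : 'I_(p + q) * V) : {poly R} :=
  'X *+ (x == y) - ((@union_rel V (p + q) e x y)%:R + ((x == y) && (x \in L))%:R)%:P.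
rewrite /char_poly /char_poly_mx.
have -> : 'X%:M - map_mx polyC (adjmx R (@union_rel V (p + q) e) L)
        = \matrix_(i, j) FU (enum_val i) (enum_val j).
  by apply/matrixP => i j; rewrite !mxE /FU (inj_eq enum_val_inj).
rewrite det_blocks; last first.
  move=> x y nxy; rewrite /FU /union_rel.
  have -> : (x == y) = false by apply/negbTE; apply: contra nxy => /eqP ->.
  by rewrite (negbTE nxy) /= mulr0n addr0 polyC0 subr0.
apply: eq_bigr => k _.
case: ifP => hk.
  congr (\det _); apply/matrixP => i j; rewrite !mxE /FU /union_rel /L /union_loops.
  by rewrite xpair_eqE eqxx /= inE /= leqNgt hk andbF in_set0 andbF (inj_eq enum_val_inj).
rewrite -det_map_mx.
congr (\det _); apply/matrixP => i j; rewrite !mxE /FU /union_rel /L /union_loops.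
rewrite xpair_eqE eqxx /= inE /= leqNgt hk andbT in_set0 andbF (inj_eq enum_val_inj).
rewrite comp_polyB comp_polyC.
case: eqP => _; rewrite ?mulr1n ?mulr0n ?comp_polyX ?comp_poly0 ?addr0 //.
by rewrite rmorphD /= polyC1 opprD addrA addrAC.
Qed.

Theorem theorem2 (R : realType) (V : finType) (e : rel V) (p q : nat) :
  simple_graph e ->
  (0 < p + q)%N ->
  forall sG : seq R, is_spectrum (adjmx R e set0) sG ->
  (forall x, x \in sG ->
     Num.max (p%:R / (p + q)%:R) (q%:R / (p + q)%:R) <= `|x|) ->
  forall sU : seq R,
    is_spectrum (adjmx R (@union_rel V (p + q) e) (union_loops V p (p + q))) sU ->
    energy_of sU #|union_loops V p (p + q)| #|{: 'I_(p + q) * V}|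
    = (p + q)%:R * energy_of sG 0 #|V|.
Proof.
move=> _ mpos sG hsG hx sU hsU.
pose s (k : 'I_(p + q)) := if (k < p)%N then sG else map (fun x => x + 1) sG.
pose S := flatten [seq s k | k <- index_enum 'I_(p + q)].
have hS : perm_eq sU S.
  apply: prod_XsubC_eq; rewrite -hsU char_union big_flatten /= big_map.
  apply: eq_bigr => k _; rewrite /s; case: ifP => _; first by rewrite hsG.
  rewrite hsG rmorph_prod big_map; apply: eq_bigr => x _.
  change (('X - x%:P) \Po ('X - 1) = 'X - (x + 1)%:P).
  by rewrite comp_polyB comp_polyX comp_polyC rmorphD /= polyC1 opprD addrA addrAC.
rewrite /energy_of (perm_big _ hS) big_flatten /= big_map.
rewrite big_split_ord /=.
rewrite (eq_bigr (fun _ => \sum_(x <- sG) `|x - #|union_loops V p (p + q)|%:R / #|{: 'I_(p + q) * V}|%:R|)); last first.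
  by move=> i _; rewrite /s (ltn_ord i).
rewrite [X in _ + X](eq_bigr (fun _ => \sum_(x <- sG) `|x + 1 - #|union_loops V p (p + q)|%:R / #|{: 'I_(p + q) * V}|%:R|)); last first.
  by move=> i _; rewrite /s /= ltnNge leq_addr /= big_map.
rewrite !sumr_const !card_ord mul0r.
have [->|sGn0] := eqVneq sG [::].
  by rewrite !big_nil !mul0rn mulr0 addr0.
have n0 : (0 < #|V|)%N.
  have hz := congr1 (fun r : {poly R} => size r) hsG; move: hz; rewrite /= size_char_poly size_prod_XsubC => -[->].
  by move: sGn0; case: (sG).
have hc : #|union_loops V p (p + q)|%:R / #|{: 'I_(p + q) * V}|%:R
          = q%:R / (p + q)%:R :> R.
  rewrite card_loops card_prod card_ord !natrM -mulf_div divff ?mulr1 //.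
  by rewrite pnatr_eq0 -lt0n.
rewrite hc.
have E (a : R) n : a *+ n = n%:R * a by rewrite mulr_natl.
rewrite (E (\sum_(x <- sG) `|x - q%:R / (p + q)%:R|) p).
rewrite (E (\sum_(x <- sG) `|x + 1 - q%:R / (p + q)%:R|) q).
rewrite !mulr_sumr -big_split /=.
apply: eq_big_seq => x xin; rewrite subr0.
by rewrite pointwise // hx.
Qed.
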